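(* Let $G$ be a simple graph with a consistent link-coloring $c$ (in the sense of the context), and let $\alpha\neq\beta$ be two colors. Let $H$ be an $(\alpha,\beta)$ cycle, i.e. a cycle of $G$ all of whose links are colored $\alpha$ or $\beta$. If $H$ has an even number of edges, then $H$ contains an even number of variable edges; if $H$ has an odd number of edges, then $H$ contains an odd number of variable edges.
   Context: Let $G=(V,E)$ be a simple graph. Each edge $e_{i,j}=v_iv_j$ is regarded as consisting of two links (half-edges): $l_{i,j}$, incident to $v_i$, and $l_{j,i}$, incident to $v_j$. A coloring function is a map $c$ assigning to every link a color from a set $C$ of colors; write $c_{i,j}=c(l_{i,j})$, and the colored edge is the pair $(c_{i,j},c_{j,i})$. The colored edge is a constant if $c_{i,j}=c_{j,i}$ and a variable otherwise. The coloring is consistent if, at every vertex $v$, all links incident to $v$ receive distinct colors. For colors $\alpha\neq\beta$, an $(\alpha,\beta)$ cycle is a cycle in $G$ every link of which (both links of every edge of the cycle) has color in $\{\alpha,\beta\}$; its parity is the parity of its number of edges. *)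

(* Defs.v *)
From mathcomp Require Import all_boot.
Set Implicit Arguments. Unset Strict Implicit. Unset Printing Implicit Defensive.

Definition simple_graph (V : finType) (adj : rel V) : Prop :=
  symmetric adj /\ irreflexive adj.

(* A link coloring: c u v is the color c_{u,v} of the link l_{u,v} of edge uv
   incident to u (only meaningful when adj u v). *)
Definition link_coloring (V : finType) (C : eqType) := V -> V -> C.

Definition consistent (V : finType) (C : eqType) (adj : rel V)
    (c : link_coloring V C) : Prop :=
  forall v u w, adj v u -> adj v w -> u != w -> c v u != c v w.

Definition is_graph_cycle (V : finType) (adj : rel V) (p : seq V) : Prop :=
  3 <= size p /\ ucycle adj p.

Definition cycle_edges (V : finType) (p : seq V) : seq (V * V) :=
  zip p (rot 1 p).

Definition ab_cycle (V : finType) (C : eqType) (adj : rel V)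
    (c : link_coloring V C) (a b : C) (p : seq V) : Prop :=
  is_graph_cycle adj p /\
  all (fun e => (c e.1 e.2 \in [:: a; b]) && (c e.2 e.1 \in [:: a; b]))
      (cycle_edges p).

Definition variable_edge (V : finType) (C : eqType) (c : link_coloring V C)
    (e : V * V) : bool := c e.1 e.2 != c e.2 e.1.

Definition num_variable_edges (V : finType) (C : eqType)
    (c : link_coloring V C) (p : seq V) : nat :=
  count (variable_edge c) (cycle_edges p).

(* Main.v *)
Require Import Defs.
From mathcomp Require Import all_boot.
From mathcomp Require Import zify.

Lemma nth_rot1 (T : Type) (x0 : T) (s : seq T) i : i < size s ->
  nth x0 (rot 1 s) i = nth x0 s ((i.+1) %% size s).
Proof.
case: s => [|x t] //= Hi.
rewrite rot1_cons nth_rcons.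
case: (ltnP i (size t)) => H.
  by rewrite modn_small //= ltnS.
have Ei : i = size t by lia.
by rewrite Ei eqxx modnn.
Qed.

Lemma count_neq_and (I : Type) (f g : pred I) (s : seq I) :
  count (fun i => f i != g i) s + 2 * count (fun i => f i && g i) s
  = count f s + count g s.
Proof.
elim: s => //= i s IH.
case: (f i); case: (g i) => /=; lia.
Qed.

Theorem lemma1 (V : finType) (C : eqType) (adj : rel V)
    (c : link_coloring V C) (alpha beta : C) (p : seq V) :
  simple_graph adj ->
  consistent adj c ->
  alpha != beta ->
  ab_cycle adj c alpha beta p ->
  (~~ odd (size (cycle_edges p)) -> ~~ odd (num_variable_edges c p)) /\
  (odd (size (cycle_edges p)) -> odd (num_variable_edges c p)).
Proof.
move=> [Hsym Hirr] Hcons Hab [[Hsz /andP [Hcyc Huniq]] Hall].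
case: p Hsz Hcyc Huniq Hall => [|x0 t] // Hsz Hcyc Huniq Hall.
set p := x0 :: t in Hsz Hcyc Huniq Hall *.
set k := size p.
set q := fun i => nth x0 p i.
set nx := fun i => (i.+1) %% k.
have kpos : 0 < k by [].
have nxk : forall i, nx i < k by move=> i; rewrite /nx ltn_mod.
have Erot : rot 1 p = map (fun i => q (nx i)) (iota 0 k).
  apply: (@eq_from_nth _ x0); first by rewrite size_map size_iota size_rot.
  move=> i; rewrite size_rot => Hi.
  by rewrite nth_rot1 // (nth_map 0) ?size_iota // nth_iota.
have Ep : p = map q (iota 0 k) by rewrite -[LHS](mkseq_nth x0).
have EE : cycle_edges p = map (fun i => (q i, q (nx i))) (iota 0 k).
  by rewrite /cycle_edges Erot {1}Ep zip_map.
have HA : forall i, i < k -> adj (q i) (q (nx i)).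
  move=> i Hi.
  move: Hcyc; rewrite /= => /(pathP x0) H.
  have := H i; rewrite size_rcons => /(_ Hi).
  rewrite -rcons_cons nth_rcons -/p -/k.
  Show.
  have -> : nth x0 (rcons t x0) i = q (nx i).
    by rewrite -rot1_cons -/p nth_rot1.
  by rewrite Hi.
have HB : forall i, i < k ->
   (c (q i) (q (nx i)) \in [:: alpha; beta]) &&
   (c (q (nx i)) (q i) \in [:: alpha; beta]).
  move=> i Hi; rewrite EE in Hall.
  move/allP: Hall => /(_ (q i, q (nx i))); apply.
  by apply: map_f; rewrite mem_iota.
have two : forall y z, y \in [:: alpha; beta] -> z \in [:: alpha; beta] ->
    (y != z) = ((y == alpha) != (z == alpha)).
  move=> y z; rewrite !inE => /orP [] /eqP -> /orP [] /eqP ->;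
    rewrite ?eqxx //= ?(negPf Hab) ?(eq_sym beta alpha) ?(negPf Hab) //.
set u := fun i => c (q i) (q (nx i)) == alpha.
set w := fun i => c (q (nx i)) (q i) == alpha.
have Hw : forall i, i < k -> w i = ~~ u (nx i).
  move=> i Hi; set j := nx i.
  have Hj : j < k by apply: nxk.
  have neq : q i != q (nx j).
    rewrite /q nth_uniq // ?nxk //.
    rewrite /j /nx; apply/eqP => E.
    have Hk3 : 3 <= k by [].
    move: E; rewrite -/k.
    case: (ltnP i.+1 k) => H1.
      rewrite (modn_small H1).
      case: (ltnP i.+2 k) => H2; first by rewrite (modn_small H2); lia.
      have -> : i.+2 = k by lia.
      rewrite modnn; lia.
    have -> : i.+1 = k by lia.
    rewrite modnn modn_small; lia.
  have := Hcons (q j) (q i) (q (nx j)).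
  rewrite Hsym HA // HA // neq => /(_ isT isT isT).
  move/andP: (HB i Hi) => [_ H1]; move/andP: (HB j Hj) => [H2 _].
  rewrite (two _ _ H1 H2) /w /u -/j.
  by case: (_ == alpha); case: (_ == alpha).
have Hvar : num_variable_edges c p = count (fun i => u i != w i) (iota 0 k).
  rewrite /num_variable_edges EE count_map; apply: eq_in_count => i.
  rewrite mem_iota add0n => /andP [_ Hi] /=.
  by rewrite /variable_edge /=; move/andP: (HB i Hi) => [H1 H2]; rewrite two.
have Hcw : count w (iota 0 k) = count (predC u) (map nx (iota 0 k)).
  rewrite count_map; apply: eq_in_count => i.
  by rewrite mem_iota add0n => /andP [_ Hi]; rewrite /= Hw.
have Hmap : map nx (iota 0 k) = rot 1 (iota 0 k).
  apply: (@eq_from_nth _ 0); first by rewrite size_map size_rot.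
  move=> i; rewrite size_map size_iota => Hi.
  rewrite nth_rot1 ?size_iota // (nth_map 0) ?size_iota // !nth_iota //.
  by rewrite ltn_mod.
have Hperm : count (predC u) (map nx (iota 0 k)) = count (predC u) (iota 0 k).
  by rewrite Hmap; apply/permP; rewrite perm_rot.
have Hsum : num_variable_edges c p
   + 2 * count (fun i => u i && w i) (iota 0 k) = k.
  rewrite Hvar count_neq_and Hcw Hperm count_predC size_iota //.
have Hsize : size (cycle_edges p) = k.
  by rewrite /cycle_edges size_zip size_rot minnn.
have Hodd : odd (num_variable_edges c p) = odd k.
  by rewrite -Hsum oddD oddM /= addbF.
by rewrite Hsize Hodd; split.
Qed.
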